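(* Let a document collection $\mathcal{D}$ be partitioned into $n$ pairwise disjoint shards $D_1,\dots,D_n$, and let $r\ge1$ identical replicas of this partition be stored, each of the $nr$ shard replicas on its own node. Fix a query $q$ with a unique relevant document $d_q$, where $d_q$ is stored in $D_j$ with probability $p(j)$, $\sum_{j=1}^n p(j)=1$. Each node independently fails to respond with probability $f\in[0,1]$, independently of the location of $d_q$. The success probability of a selection of shard replicas is the probability that $d_q$ lies in a shard of which some selected replica responds. The rSmartRed selection assigns to the $i$-th replica of shard $D_j$ ($1\le i\le r$, $1\le j\le n$) the score $f^{i-1}p(j)$ and selects the $tr$ shard replicas with the highest scores (querying shard $D_j$ at as many replicas as the number of its selected pairs $(j,i)$). Then for every integer $tr$ with $1\le tr\le nr$, the rSmartRed selection of $tr$ shard replicas maximizes the success probability among all selections of $tr$ shard replicas.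
   Context: Distributed search model: each node searches only its own shard replica; the query is sent to the selected replicas, and results of nodes that fail to respond are dropped. Here $t$ and $r$ are positive integers and $tr$ is the budget of shard replicas to select. *)

(* Defs.v *)
From mathcomp Require Import all_boot all_order all_algebra.
Set Implicit Arguments. Unset Strict Implicit. Unset Printing Implicit Defensive.
Import Order.TTheory GRing.Theory Num.Theory.
Local Open Scope ring_scope.

(* A shard replica (node) is a pair (j, i): the (i+1)-th replica of shard D_(j+1)
   (0-based indices j : 'I_n, i : 'I_r). A selection is a set of nodes. *)

Definition fail_pattern_prob (R : realFieldType) (n r : nat) (f : R)
    (w : {ffun 'I_n * 'I_r -> bool}) : R :=
  \prod_(x : 'I_n * 'I_r) (if w x then f else 1 - f).

Definition success_prob (R : realFieldType) (n r : nat) (p : 'I_n -> R) (f : R)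
    (S : {set 'I_n * 'I_r}) : R :=
  \sum_(j : 'I_n) \sum_(w : {ffun 'I_n * 'I_r -> bool})
     p j * fail_pattern_prob f w * ([exists x in S, (x.1 == j) && ~~ w x] : bool)%:R.

Definition rscore (R : realFieldType) (n r : nat) (p : 'I_n -> R) (f : R)
    (x : 'I_n * 'I_r) : R := f ^+ x.2 * p x.1.

Definition is_rSmartRed (R : realFieldType) (n r : nat) (p : 'I_n -> R) (f : R)
    (k : nat) (S : {set 'I_n * 'I_r}) : Prop :=
  #|S| = k /\
  forall x y : 'I_n * 'I_r, x \in S -> y \notin S -> rscore p f y <= rscore p f x.

(* Main.v *)
Require Import Defs.
From mathcomp Require Import all_boot all_order all_algebra.
Set Implicit Arguments. Unset Strict Implicit. Unset Printing Implicit Defensive.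
Import Order.TTheory GRing.Theory Num.Theory.
Local Open Scope ring_scope.

Definition Isec (n r : nat) (j : 'I_n) (T : {set 'I_n * 'I_r}) : {set 'I_r} :=
  [set i | (j, i) \in T].

Lemma card_sec (n r : nat) (j : 'I_n) (T : {set 'I_n * 'I_r}) :
  #|[pred x | (x \in T) && (x.1 == j)]| = #|Isec j T|.
Proof.
have H : [pred x | (x \in T) && (x.1 == j)] =i [set (j, i) | i in Isec j T].
  move=> [a b]; rewrite !inE /=; apply/idP/imsetP.
    by case/andP=> H /eqP E; subst a; exists b => //; rewrite inE.
  case=> i; rewrite inE => H E; case: E H => -> -> H; by rewrite H eqxx.
rewrite (eq_card H) card_imset // => i1 i2 []. done.
Qed.

Lemma fail_sum (R : realFieldType) (n r : nat) (f : R) (A : pred ('I_n * 'I_r)) :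
  \sum_(w : {ffun 'I_n * 'I_r -> bool})
     fail_pattern_prob f w * ([exists x in A, ~~ w x] : bool)%:R = 1 - f ^+ #|A|.
Proof.
have E : forall w : {ffun 'I_n * 'I_r -> bool}, ([exists x in A, ~~ w x] : bool)%:R =
   1 - \prod_x (if x \in A then (w x : bool)%:R else 1) :> R.
  move=> w; case: existsP => [[x /andP[Hx Hw]]|H].
    by rewrite (bigD1 x) //= Hx (negbTE Hw) mul0r subr0.
  rewrite big1 ?subrr // => x _; case: ifP => // Hx.
  case Hw: (w x) => //. case: H; exists x; by rewrite Hx Hw.
under eq_bigr => w _ do rewrite E mulrBr mulr1 /fail_pattern_prob -big_split /=.
rewrite sumrB.
rewrite -(bigA_distr_bigA (fun x (b : bool) => if b then f else 1 - f)).
rewrite -(bigA_distr_bigA (fun x (b : bool) => (if b then f else 1 - f) *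
     (if x \in A then (b : bool)%:R else 1))).
have -> : \prod_(x : 'I_n * 'I_r) \sum_(b : bool) (if b then f else 1 - f) = 1.
  by rewrite big1 // => x _; rewrite big_bool /= addrCA subrr addr0.
congr (_ - _).
rewrite -prodr_const [RHS]big_mkcond /=; apply: eq_bigr => x _.
by rewrite big_bool /=; case: ifP => _; rewrite ?mulr1 ?mulr0 ?addr0 // addrCA subrr addr0.
Qed.

Lemma success_eq (R : realFieldType) (n r : nat) (p : 'I_n -> R) (f : R)
    (T : {set 'I_n * 'I_r}) :
  success_prob p f T = \sum_j p j * (1 - f ^+ #|Isec j T|).
Proof.
apply: eq_bigr => j _.
rewrite -card_sec -(fail_sum f) mulr_sumr; apply: eq_bigr => w _.
rewrite mulrA.
have -> : [exists x in T, (x.1 == j) && ~~ w x] =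
  [exists x in [pred x0 | (x0 \in T) && (x0.1 == j)], ~~ w x].
  apply/idP/idP => /existsP[x H]; apply/existsP; exists x; move: H; rewrite !inE; by rewrite andbA.
by [].
Qed.
Lemma small_card (r M : nat) (I : {set 'I_r}) :
  (forall i, i \in I -> (i < M)%N) -> (#|I| <= M)%N.
Proof.
move=> H.
have -> : #|I| = size [seq val i | i <- enum I] by rewrite size_map cardE.
rewrite -[M in (_ <= M)%N](size_iota 0 M).
apply: uniq_leq_size; first by rewrite map_inj_uniq ?enum_uniq //; apply: val_inj.
by move=> x /mapP[i]; rewrite mem_enum => /H Hi ->; rewrite mem_iota.
Qed.

Lemma pow_bound (R : realFieldType) (r : nat) (f : R) : 0 <= f -> f <= 1 ->
  forall k (I : {set 'I_r}), #|I| = k ->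
  \sum_(i in I) f ^+ i <= \sum_(m < k) f ^+ m.
Proof.
move=> f0 f1; elim=> [|k IH] I HI.
  by rewrite (cards0_eq HI) big_set0 big_ord0.
have : (0 < #|I|)%N by rewrite HI.
case/card_gt0P=> i0 Hi0.
case: (arg_maxnP (fun i : 'I_r => val i) Hi0) => M HM0 Hmax.
have HM : M \in I by [].
have {}Hmax : forall i, i \in I -> (i <= M)%N by move=> i Hi; apply: Hmax.
rewrite (big_setD1 _ HM) big_ord_recr /= addrC.
have HD : #|I :\ M| = k by move: HI; rewrite (cardsD1 M) HM add1n => -[].
apply: lerD; first exact: IH.
apply: ler_wiXn2l => //.
rewrite -HD; apply: small_card => i; rewrite !inE => /andP[Hne Hi].
by rewrite ltn_neqAle Hmax // andbT; apply: contraNneq Hne => /val_inj ->.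
Qed.
Lemma topk (R : realFieldType) (T : finType) (F : T -> R) (S U : {set T}) :
  #|U| = #|S| -> (forall x y, x \in S -> y \notin S -> F y <= F x) ->
  \sum_(x in U) F x <= \sum_(x in S) F x.
Proof.
move=> HU H.
rewrite [X in X <= _](big_setID S) [X in _ <= X](big_setID U) /= setIC lerD2l.

have Hc : #|S :\: U| = #|U :\: S|.
  have := cardsID U S; have := cardsID S U; rewrite setIC HU => <-.
  by move/addnI.
have key : 0 <= \sum_(x in S :\: U) \sum_(y in U :\: S) (F x - F y).
  apply: sumr_ge0 => x; rewrite inE => /andP[_ Hx].
  apply: sumr_ge0 => y; rewrite inE => /andP[Hy _].
  by rewrite subr_ge0 H.
move: key; rewrite (eq_bigr (fun x => F x *+ #|U :\: S| - \sum_(y in U :\: S) F y)); last first.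
  by move=> x _; rewrite sumrB sumr_const.
rewrite sumrB sumr_const sumrMnl -Hc.
set a := \sum_(i in S :\: U) F i; set b := \sum_(i in U :\: S) F i.
have -> : a *+ #|S :\: U| - b *+ #|S :\: U| = (a - b) *+ #|S :\: U| by rewrite mulrnBl.
case: (posnP #|S :\: U|) => Hz.
  move=> _; rewrite /a /b Hz in Hc *.
  rewrite (cards0_eq Hz) (cards0_eq (esym Hc)) !big_set0 //.
by rewrite pmulrn_lge0 // subr_ge0.
Qed.
Lemma sum_sec (R : realFieldType) (n r : nat) (F : 'I_n * 'I_r -> R) (T : {set 'I_n * 'I_r}) :
  \sum_(x in T) F x = \sum_j \sum_(i in Isec j T) F (j, i).
Proof.
under [RHS]eq_bigr => j _ do rewrite big_mkcond.
rewrite pair_big big_mkcond /=; apply: eq_bigr => -[a b] _ /=.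
by rewrite inE.
Qed.

Lemma card_sec_sum (n r : nat) (T : {set 'I_n * 'I_r}) :
  #|T| = (\sum_j #|Isec j T|)%N.
Proof.
rewrite -sum1_card.
under [RHS]eq_bigr => j _ do rewrite -sum1_card big_mkcond.
rewrite pair_big big_mkcond /=; apply: eq_bigr => -[a b] _ /=.
by rewrite inE.
Qed.

Lemma geom (R : realFieldType) (f : R) c : 1 - f ^+ c = (1 - f) * \sum_(m < c) f ^+ m.
Proof. by rewrite -opprB subrX1 -mulNr opprB. Qed.

Lemma sum_lt (R : realFieldType) (r c : nat) (G : nat -> R) : (c <= r)%N ->
  \sum_(i in [set i : 'I_r | (i < c)%N]) G i = \sum_(m < c) G m.
Proof.
move=> H; rewrite (big_ord_widen _ _ H); apply: eq_bigl => i; by rewrite inE.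
Qed.

Lemma card_lt (r c : nat) : (c <= r)%N -> #|[set i : 'I_r | (i < c)%N]| = c.
Proof.
move=> H; rewrite -sum1_card.
rewrite (eq_bigl (fun i : 'I_r => (i < c)%N)); last by move=> i; rewrite inE.
rewrite -(big_ord_widen _ (fun _ => 1%N) H).
by rewrite sum1_card card_ord.
Qed.

Lemma Isec_le (n r : nat) (j : 'I_n) (T : {set 'I_n * 'I_r}) : (#|Isec j T| <= r)%N.
Proof. by rewrite -[X in (_ <= X)%N]card_ord max_card. Qed.

Theorem theorem1 (R : realFieldType) (n r t : nat) (p : 'I_n -> R) (f : R)
    (S : {set 'I_n * 'I_r}) :
  (0 < r)%N -> (0 < t)%N -> (1 <= t * r <= n * r)%N ->
  (forall j, 0 <= p j) -> \sum_(j < n) p j = 1 ->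
  0 <= f -> f <= 1 ->
  is_rSmartRed p f (t * r) S ->
  forall T : {set 'I_n * 'I_r}, #|T| = (t * r)%N ->
    success_prob p f T <= success_prob p f S.
Proof.
move=> _ _ _ p0 _ f0 f1 [HS Htop] T HT.
set T' := [set x : 'I_n * 'I_r | (x.2 < #|Isec x.1 T|)%N].
have HI : forall j, Isec j T' = [set i : 'I_r | (i < #|Isec j T|)%N].
  by move=> j; apply/setP => i; rewrite !inE.
have HT' : #|T'| = #|S|.
  rewrite HS -HT (card_sec_sum T') (card_sec_sum T); apply: eq_bigr => j _.
  by rewrite HI card_lt // Isec_le.
have e1 : success_prob p f T = (1 - f) * \sum_(x in T') rscore p f x.
  rewrite success_eq sum_sec mulr_sumr; apply: eq_bigr => j _.
  rewrite /rscore /= -mulr_suml HI sum_lt ?Isec_le // geom.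
  by rewrite mulrCA [p j * _]mulrC.
have e2 : (1 - f) * \sum_(x in S) rscore p f x <= success_prob p f S.
  rewrite success_eq sum_sec mulr_sumr; apply: ler_sum => j _.
  rewrite /rscore /= -mulr_suml geom mulrCA mulrA [p j * _]mulrC [_ * (1 - f)]mulrC.
  apply: ler_wpM2r; first exact: p0.
  apply: ler_wpM2l; first by rewrite subr_ge0.
  exact: pow_bound.
rewrite e1 (le_trans _ e2) // ler_wpM2l ?subr_ge0 //.
exact: topk.
Qed.
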